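(* Let $n,s,r$ be positive integers, let $\mathbf{W}_{\mathbf{x}}\in\mathbb{R}^{n\times n}$ and $\mathbf{W}_{\boldsymbol{\xi}}\in\mathbb{R}^{s\times s}$ be diagonal matrices with positive diagonal entries, and let $t\mapsto \bm{T}(t)\in\mathbb{R}^{n\times s}$ be a given differentiable matrix-valued function of time with derivative $\dot{\bm{T}}$. For matrices $\bm{U}\in\mathbb{R}^{n\times r}$, $\bm{Y}\in\mathbb{R}^{s\times r}$ and a skew-symmetric matrix function $\boldsymbol{\phi}(t)\in\mathbb{R}^{r\times r}$, consider the evolution equations $$\dot{\bm{U}} = \left(\bm{I}-\bm{U}\bm{U}^T\mathbf{W}_{\mathbf{x}}\right)\dot{\bm{T}}\,\mathbf{W}_{\boldsymbol{\xi}}\,\bm{Y}\,\bm{C}^{-1} + \bm{U}\boldsymbol{\phi},\qquad \dot{\bm{Y}} = \dot{\bm{T}}^T\mathbf{W}_{\mathbf{x}}\bm{U} + \bm{Y}\boldsymbol{\phi},$$ where $\bm{C}=\bm{Y}^T\mathbf{W}_{\boldsymbol{\xi}}\bm{Y}\in\mathbb{R}^{r\times r}$ is assumed invertible. Suppose $\{\bm{Y},\bm{U}\}$ satisfies these equations with a skew-symmetric choice $\boldsymbol{\phi}(t)$ and $\{\widetilde{\bm{Y}},\widetilde{\bm{U}}\}$ satisfies them (with $\widetilde{\bm{C}}=\widetilde{\bm{Y}}^T\mathbf{W}_{\boldsymbol{\xi}}\widetilde{\bm{Y}}$ in place of $\bm{C}$) with a skew-symmetric choice $\widetilde{\boldsymbol{\phi}}(t)$.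 Assume the two reductions are initially equivalent, i.e. $\bm{U}(0)=\widetilde{\bm{U}}(0)\bm{R}_0$ and $\bm{Y}(0)=\widetilde{\bm{Y}}(0)\bm{R}_0$ for some orthogonal matrix $\bm{R}_0\in\mathbb{R}^{r\times r}$ ($\bm{R}_0^T\bm{R}_0=\bm{I}$). Then for $t>0$ the two reductions are equivalent, i.e. $\bm{U}(t)=\widetilde{\bm{U}}(t)\bm{R}(t)$ and $\bm{Y}(t)=\widetilde{\bm{Y}}(t)\bm{R}(t)$ with an orthogonal matrix $\bm{R}(t)\in\mathbb{R}^{r\times r}$ governed by the matrix differential equation $\dot{\bm{R}}=\bm{R}\boldsymbol{\phi}-\widetilde{\boldsymbol{\phi}}\bm{R}$, $\bm{R}(0)=\bm{R}_0$.
   Context: The columns of $\bm{T}(t)$ are (mean-subtracted) observations of a stochastic system at time $t$; $\mathbf{W}_{\mathbf{x}}=\mathrm{diag}(\mathbf{w}_{\mathbf{x}})$ are state-space weights and $\mathbf{W}_{\boldsymbol{\xi}}=\mathrm{diag}(\mathbf{w}_{\boldsymbol{\xi}})$ are sample weights. The columns of $\bm{U}$ (the dynamic basis) are orthonormal with respect to the weighted inner product $\langle \bm{u}_i,\bm{u}_j\rangle=\bm{u}_i^T\mathbf{W}_{\mathbf{x}}\bm{u}_j$, i.e. $\bm{U}^T\mathbf{W}_{\mathbf{x}}\bm{U}=\bm{I}$, and $\boldsymbol{\phi}_{ij}=\langle\bm{u}_i,\dot{\bm{u}}_j\rangle$ is skew-symmetric. Two reductions $\{\bm{Y},\bm{U}\}$,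 $\{\widetilde{\bm{Y}},\widetilde{\bm{U}}\}$ with $\bm{U},\widetilde{\bm{U}}\in\mathbb{R}^{n\times r}$, $\bm{Y},\widetilde{\bm{Y}}\in\mathbb{R}^{s\times r}$ are called equivalent if there is an orthogonal $\bm{R}\in\mathbb{R}^{r\times r}$ with $\bm{U}=\widetilde{\bm{U}}\bm{R}$ and $\bm{Y}=\widetilde{\bm{Y}}\bm{R}$. *)

(* Defs.v *)
From HB Require Import structures.
From mathcomp Require Import all_boot all_order all_algebra.
From mathcomp Require Import all_classical all_reals.
From mathcomp Require Import topology normedtype derive.
Set Implicit Arguments. Unset Strict Implicit. Unset Printing Implicit Defensive.
Import Order.TTheory GRing.Theory Num.Theory.
Local Open Scope ring_scope.

Definition mx_deriv_at (R : realType) (m n : nat)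
  (F : R -> 'M[R]_(m, n)) (t : R) (D : 'M[R]_(m, n)) : Prop :=
  forall (i : 'I_m) (j : 'I_n), is_derive (t : R^o) (1 : R^o) (fun s : R^o => F s i j : R^o) (D i j).

Definition mx_cont_at (R : realType) (m n : nat)
  (F : R -> 'M[R]_(m, n)) (t : R) : Prop :=
  forall (i : 'I_m) (j : 'I_n), {for (t : R^o), continuous (fun s : R^o => F s i j : R^o)}.

Definition skew_mx (R : realType) (r : nat) (A : 'M[R]_r) : Prop := A^T = - A.

Definition orthogonal_mx (R : realType) (r : nat) (A : 'M[R]_r) : Prop :=
  A^T *m A = 1%:M.

(* diagonal weight matrix with positive diagonal entries *)
Definition pos_rV (R : realType) (n : nat) (w : 'rV[R]_n) : Prop :=
  forall i : 'I_n, 0 < w 0 i.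

Definition evol_eqs (R : realType) (n s r : nat)
  (Wx : 'M[R]_n) (Wxi : 'M[R]_s) (dT : 'M[R]_(n, s))
  (U dU : 'M[R]_(n, r)) (Y dY : 'M[R]_(s, r)) (phi : 'M[R]_r) : Prop :=
  let C := Y^T *m Wxi *m Y in
  dU = (1%:M - U *m U^T *m Wx) *m dT *m Wxi *m Y *m invmx C + U *m phi /\
  dY = dT^T *m Wx *m U + Y *m phi.

(* Main.v *)
Require Import Defs.
From HB Require Import structures.
From mathcomp Require Import all_boot all_order all_algebra.
From mathcomp Require Import all_classical all_reals.
From mathcomp Require Import topology normedtype derive sequences realfun exp.
From mathcomp Require Import lra ring fingroup perm.
Import Order.TTheory GRing.Theory Num.Theory numFieldNormedType.Exports.
Local Open Scope ring_scope.
Set Implicit Arguments. Unset Strict Implicit. Unset Printing Implicit Defensive.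
Section Gron.
Variable R : realType.

Lemma is_derive_sumseq (T : Type) (l : seq T) (h : T -> R -> R) (dh : T -> R) (x : R) :
  (forall i, is_derive x 1 (h i) (dh i)) ->
  is_derive x 1 (fun s => \sum_(i <- l) h i s) (\sum_(i <- l) dh i).
Proof.
move=> H; elim: l => [|a l IH].
  rewrite big_nil; apply: is_derive_eq.
    by rewrite (_ : (fun _ => _) = cst 0); [exact: is_derive_cst|apply: funext => s; rewrite big_nil].
  by [].
rewrite big_cons (_ : (fun s => _) = h a + (fun s => \sum_(i <- l) h i s)).
  exact: is_deriveD.
by apply: funext => s; rewrite big_cons.
Qed.

Lemma is_deriveM' (f g : R -> R) (df dg : R) (x : R) :
  is_derive x 1 f df -> is_derive x 1 g dg ->
  is_derive x 1 (fun s => f s * g s) (df * g x + f x * dg).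
Proof.
move=> H1 H2; have := is_deriveM H1 H2.
move=> H.
suff -> : df * g x + f x * dg = f x *: dg + g x *: df by exact: H.
by rewrite addrC [df * _]mulrC.
Qed.
Arguments is_deriveM' {f g df dg x}.

Lemma sq_sum_le (I : finType) (a : I -> R) :
  (\sum_e `|a e|) ^+ 2 <= #|I|%:R * \sum_e a e ^+ 2.
Proof.
have E : \sum_(i : I) \sum_(j : I) (a i ^+ 2 + a j ^+ 2) =
    (\sum_e a e ^+ 2) *+ #|I| *+ 2.
  rewrite (eq_bigr (fun i => a i ^+ 2 *+ #|I| + \sum_j a j ^+ 2)); last first.
    by move=> i _; rewrite big_split /= sumr_const.
  rewrite big_split /= sumr_const -sumrMnl.
  by rewrite mulr2n.
have H : 2 * (\sum_e `|a e|) ^+ 2 <= 2 * (#|I|%:R * \sum_e a e ^+ 2).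
  have -> : 2 * (#|I|%:R * \sum_e a e ^+ 2) = \sum_(i : I) \sum_(j : I) (a i ^+ 2 + a j ^+ 2).
    by rewrite E mulr_natl mulrC mulr_natr.
  rewrite expr2 mulr_suml mulr_sumr.
  apply: ler_sum => i _; rewrite !mulr_sumr; apply: ler_sum => j _.
  have h1 : `|a i| ^+ 2 = a i ^+ 2 by rewrite real_normK ?num_real.
  have h2 : `|a j| ^+ 2 = a j ^+ 2 by rewrite real_normK ?num_real.
  rewrite -h1 -h2.
  have := normr_ge0 (a i); have := normr_ge0 (a j).
  move: (`|a i|) (`|a j|) => u v hu hv.
  have := sqr_ge0 (u - v); rewrite !expr2; nra.
by rewrite ler_pM2l in H.
Qed.

Lemma gronwall (I : finType) (x y dx dy : R -> I -> R) :
  (forall t : R, 0 <= t -> forall e, is_derive t 1 (fun s => x s e) (dx t e)) ->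
  (forall t : R, 0 <= t -> forall e, is_derive t 1 (fun s => y s e) (dy t e)) ->
  (forall e, x 0 e = y 0 e) ->
  (forall T : R, 0 <= T -> exists2 M : R, 0 <= M & forall t : R, 0 <= t -> t <= T -> forall e,
      `|dx t e - dy t e| <= M * \sum_e' `|x t e' - y t e'|) ->
  forall t : R, 0 <= t -> forall e, x t e = y t e.
Proof.
move=> Hx Hy H0 HM t t0.
have [M M0 HMb] := HM t t0.
pose N : R := #|I|%:R.
pose L := 2 * M * N.
pose E (s : R) := \sum_e (x s e - y s e) ^+ 2.
pose dE (s : R) := \sum_e ((dx s e - dy s e) * (x s e - y s e) + (x s e - y s e) * (dx s e - dy s e)).
have HE : forall s : R, 0 <= s -> is_derive s 1 E (dE s).
  move=> s s0; rewrite /E /dE; apply: is_derive_sumseq => e.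
  have hD : is_derive s 1 (fun u => x u e - y u e) (dx s e - dy s e).
    have := is_deriveB (Hx s s0 e) (Hy s s0 e); exact.
  have := is_deriveM' hD hD; exact.
have Hg : forall s : R, is_derive s 1 (fun u => expR (- L * u)) (expR (- L * s) * - L).
  move=> s.
  have h1 : is_derive s 1 (fun u : R => - L * u) (- L).
    have := is_deriveM' (is_derive_cst (- L) s 1) (is_derive_id s 1).
    by rewrite mul0r add0r mulr1.
  have := is_derive1_comp (is_derive_expR (- L * s)) h1; exact.
pose f (s : R) := E s * expR (- L * s).
have Hf : forall s : R, 0 <= s -> is_derive s 1 f (dE s * expR (- L * s) + E s * (expR (- L * s) * - L)).
  move=> s s0; have := is_deriveM' (HE s s0) (Hg s); exact.
have Hle : forall s : R, s \in `]0, t[ -> derive1 f s <= 0.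
  move=> s; rewrite in_itv /= => /andP[s0 st].
  have s0' : 0 <= s by exact: ltW.
  have := Hf s s0'; move=> hf; rewrite derive1E derive_val.
  have hb : dE s <= L * E s.
    have hB := HMb s s0' (ltW st).
    set d := \sum_e' `|x s e' - y s e'|.
    have h1 : dE s <= \sum_e (2 * `|x s e - y s e|) * (M * d).
      rewrite /dE; apply: ler_sum => e _.
      have := hB e.
      move: (dx s e - dy s e) (x s e - y s e) => a b ha.
      have hab : a * b <= `|a| * `|b| by rewrite -normrM; exact: ler_norm.
      have := normr_ge0 b; have := normr_ge0 a.
      move: (`|a|) (`|b|) ha hab => na nb ha hab hna hnb.
      have := ler_wpM2l hnb ha.
      move: (M * d) => md; nra.
    have h2 : \sum_e (2 * `|x s e - y s e|) * (M * d) = 2 * M * d ^+ 2.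
      by rewrite -mulr_suml -mulr_sumr -/d expr2; ring.
    have h3 : d ^+ 2 <= N * E s.
      rewrite /d /N /E.
      have := @sq_sum_le I (fun e => x s e - y s e); exact.
    rewrite /L; move: h1; rewrite h2 => h1.
    have := mulr_ge0 M0 (ler0n _ 2); nra.
  have ep := expR_gt0 (- L * s).
  nra.
have Hd : forall u : R, u \in `]0, t[ -> derivable f u 1.
  move=> u; rewrite in_itv /= => /andP[u0 _]; apply: ex_derive; exact: (Hf u (ltW u0)).
have Hcont : {within `[0, t], continuous f}%classic.
  apply: derivable_within_continuous => u; rewrite in_itv /= => /andP[u0 _].
  apply: ex_derive; exact: (Hf u u0).
have mono := ler0_derive1_le_cc Hd Hle Hcont.
have ft : f t <= f 0.
  by apply: mono => //; rewrite in_itv /= ?lexx ?t0.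
have E0 : E 0 = 0 by rewrite /E big1 // => e _; rewrite H0 subrr expr0n.
have Et0 : 0 <= E t by rewrite /E; apply: sumr_ge0 => e _; exact: sqr_ge0.
have Et : E t = 0.
  move: ft; rewrite /f E0 mul0r => ft.
  have ep := expR_gt0 (- L * t).
  apply/eqP; rewrite eq_le Et0 andbT.
  nra.
move=> e.
have := psumr_eq0P (fun e _ => sqr_ge0 (x t e - y t e)) Et.
by move=> /(_ e isT) /eqP; rewrite sqrf_eq0 subr_eq0 => /eqP.
Qed.

End Gron.
Section MxCalc.
Variable R : realType.

Definition mderiv (m n : nat) (F : R -> 'M[R]_(m, n)) (t : R) (D : 'M[R]_(m, n)) :=
  forall i j, is_derive t 1 (fun s => F s i j) (D i j).

Definition mcont (m n : nat) (F : R -> 'M[R]_(m, n)) (t : R) :=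
  forall i j, {for t, continuous (fun s => F s i j)}.

Lemma mderivE m n (F : R -> 'M[R]_(m, n)) t D : mx_deriv_at F t D <-> mderiv F t D.
Proof. by split => H i j; have := H i j; exact. Qed.

Lemma mcontE m n (F : R -> 'M[R]_(m, n)) t : mx_cont_at F t <-> mcont F t.
Proof. by split => H i j; have := H i j; exact. Qed.

Lemma mderiv_eq m n (F : R -> 'M[R]_(m, n)) t D D' : mderiv F t D -> D = D' -> mderiv F t D'.
Proof. by move=> H <-. Qed.

Lemma mderiv_ext m n (F G : R -> 'M[R]_(m, n)) t D : (forall s, F s = G s) -> mderiv F t D -> mderiv G t D.
Proof. by move=> e; rewrite (_ : G = F) //; apply: funext => s; rewrite e. Qed.

Lemma mderiv_cst m n (c : 'M[R]_(m, n)) t : mderiv (fun _ => c) t 0.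
Proof. by move=> i j; rewrite mxE; exact: is_derive_cst. Qed.

Lemma mderiv_add m n (F G : R -> 'M[R]_(m, n)) t dF dG :
  mderiv F t dF -> mderiv G t dG -> mderiv (fun s => F s + G s) t (dF + dG).
Proof.
move=> hF hG i j; rewrite mxE.
rewrite (_ : (fun s => (F s + G s) i j) = (fun s => F s i j) + (fun s => G s i j)).
  exact: is_deriveD.
by apply: funext => s; rewrite mxE.
Qed.

Lemma mderiv_opp m n (F : R -> 'M[R]_(m, n)) t dF :
  mderiv F t dF -> mderiv (fun s => - F s) t (- dF).
Proof.
move=> hF i j; rewrite mxE.
rewrite (_ : (fun s => (- F s) i j) = - (fun s => F s i j)).
  exact: is_deriveN.
by apply: funext => s; rewrite mxE.
Qed.

Lemma mderiv_sub m n (F G : R -> 'M[R]_(m, n)) t dF dG :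
  mderiv F t dF -> mderiv G t dG -> mderiv (fun s => F s - G s) t (dF - dG).
Proof. by move=> hF hG; apply: mderiv_add => //; exact: mderiv_opp. Qed.

Lemma mderiv_tr m n (F : R -> 'M[R]_(m, n)) t dF :
  mderiv F t dF -> mderiv (fun s => (F s)^T) t dF^T.
Proof.
move=> hF i j; rewrite mxE.
rewrite (_ : (fun s => (F s)^T i j) = (fun s => F s j i)); first exact: hF.
by apply: funext => s; rewrite mxE.
Qed.

Lemma mderiv_mul m n p (F : R -> 'M[R]_(m, n)) (G : R -> 'M[R]_(n, p)) t dF dG :
  mderiv F t dF -> mderiv G t dG ->
  mderiv (fun s => F s *m G s) t (dF *m G t + F t *m dG).
Proof.
move=> hF hG i j.
rewrite (_ : (fun s => (F s *m G s) i j) = (fun s => \sum_k F s i k * G s k j)); last first.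
  by apply: funext => s; rewrite mxE.
rewrite !mxE -big_split /=.
apply: is_derive_sumseq => k.
have := is_deriveM' (hF i k) (hG k j); exact.
Qed.

Lemma mcont_of_deriv m n (F : R -> 'M[R]_(m, n)) t D : mderiv F t D -> mcont F t.
Proof.
move=> H i j; apply: differentiable_continuous; rewrite -derivable1_diffP.
apply: ex_derive; exact: H.
Qed.

Lemma cont_sumseq (T : Type) (l : seq T) (h : T -> R -> R) (x : R) :
  (forall i, {for x, continuous (h i)}) ->
  {for x, continuous (fun s => \sum_(i <- l) h i s)}.
Proof.
move=> H; elim: l => [|a l IH].
  rewrite (_ : (fun _ => _) = (fun _ => 0)); first exact: cst_continuous.
  by apply: funext => s; rewrite big_nil.
rewrite (_ : (fun s => _) = h a + (fun s => \sum_(i <- l) h i s)).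
  exact: continuousD.
by apply: funext => s; rewrite big_cons.
Qed.

Lemma cont_prodseq (T : Type) (l : seq T) (h : T -> R -> R) (x : R) :
  (forall i, {for x, continuous (h i)}) ->
  {for x, continuous (fun s => \prod_(i <- l) h i s)}.
Proof.
move=> H; elim: l => [|a l IH].
  rewrite (_ : (fun _ => _) = (fun _ => 1)); first exact: cst_continuous.
  by apply: funext => s; rewrite big_nil.
rewrite (_ : (fun s => _) = h a \* (fun s => \prod_(i <- l) h i s)).
  exact: continuousM.
by apply: funext => s; rewrite big_cons.
Qed.

Lemma mcont_cst m n (c : 'M[R]_(m, n)) t : mcont (fun _ => c) t.
Proof. by move=> i j; exact: cst_continuous. Qed.

Lemma mcont_tr m n (F : R -> 'M[R]_(m, n)) t : mcont F t -> mcont (fun s => (F s)^T) t.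
Proof.
move=> hF i j.
rewrite (_ : (fun s => (F s)^T i j) = (fun s => F s j i)); first exact: hF.
by apply: funext => s; rewrite mxE.
Qed.

Lemma mcont_mul m n p (F : R -> 'M[R]_(m, n)) (G : R -> 'M[R]_(n, p)) t :
  mcont F t -> mcont G t -> mcont (fun s => F s *m G s) t.
Proof.
move=> hF hG i j.
rewrite (_ : (fun s => (F s *m G s) i j) = (fun s => \sum_k F s i k * G s k j)); last first.
  by apply: funext => s; rewrite mxE.
apply: cont_sumseq => k.
exact: continuousM.
Qed.

Lemma cont_det n (F : R -> 'M[R]_n) t : mcont F t -> {for t, continuous (fun s => \det (F s))}.
Proof.
move=> hF.
rewrite (_ : (fun s => \det (F s)) = (fun s => \sum_(p : 'S_n) ((-1) ^+ p * \prod_i F s i (p i)))); last first.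
  by apply: funext => s; rewrite /determinant.
apply: cont_sumseq => p.
rewrite (_ : (fun s => _) = (fun _ => (-1) ^+ p : R) \* (fun s => \prod_i F s i (p i))) //.
apply: continuousM; first exact: cst_continuous.
by apply: cont_prodseq => i; exact: hF.
Qed.

Lemma mcont_adj n (F : R -> 'M[R]_n) t : mcont F t -> mcont (fun s => \adj (F s)) t.
Proof.
move=> hF i j.
rewrite (_ : (fun s => \adj (F s) i j) = (fun _ => (-1) ^+ (j + i) : R) \* (fun s => \det (row' j (col' i (F s))))); last first.
  by apply: funext => s; rewrite mxE /cofactor.
apply: continuousM; first exact: cst_continuous.
apply: cont_det => a b.
rewrite (_ : (fun s => _) = (fun s => F s (lift j a) (lift i b))); first exact: hF.
by apply: funext => s; rewrite !mxE.
Qed.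

End MxCalc.
Section Bounds.
Variable R : realType.
Variable T : R.
Variable delta : R -> R.

Definition inT (t : R) := 0 <= t <= T.

Definition bnd p q (F : R -> 'M[R]_(p, q)) :=
  exists2 M : R, 0 <= M & forall t, inT t -> forall i j, `|F t i j| <= M.
Definition ctl p q (F G : R -> 'M[R]_(p, q)) :=
  exists2 M : R, 0 <= M & forall t, inT t -> forall i j, `|F t i j - G t i j| <= M * delta t.
Definition good p q (F G : R -> 'M[R]_(p, q)) := [/\ bnd F, bnd G & ctl F G].

Lemma le_sum_one (I : finType) (f : I -> R) (i : I) : (forall k, 0 <= f k) -> f i <= \sum_k f k.
Proof.
by move=> h; rewrite (bigD1 i) //= lerDl; apply: sumr_ge0 => k _.
Qed.

Lemma mul_entry_le m n p (A : 'M[R]_(m, n)) (B : 'M[R]_(n, p)) a b i j :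
  (forall i k, `|A i k| <= a) -> (forall k j, `|B k j| <= b) ->
  `|(A *m B) i j| <= n%:R * (a * b).
Proof.
move=> hA hB; rewrite mxE.
apply: (le_trans (ler_norm_sum _ _ _)).
have -> : n%:R * (a * b) = \sum_(k < n) (a * b).
  by rewrite sumr_const card_ord mulr_natl.
apply: ler_sum => k _; rewrite normrM.
by apply: ler_pM => //; exact: normr_ge0.
Qed.

Lemma bnd_cst p q (c : 'M[R]_(p, q)) : bnd (fun _ => c).
Proof.
exists (\sum_i \sum_j `|c i j|).
  by apply: sumr_ge0 => i _; apply: sumr_ge0 => j _; exact: normr_ge0.
move=> t _ i j.
apply: (@le_trans _ _ (\sum_j' `|c i j'|)).
  by apply: (@le_sum_one _ (fun k => `|c i k|) j) => k; exact: normr_ge0.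
apply: (@le_sum_one _ (fun i' => \sum_j' `|c i' j'|) i).
by move=> k; apply: sumr_ge0 => l _; exact: normr_ge0.
Qed.

Lemma bnd_add p q (F G : R -> 'M[R]_(p, q)) : bnd F -> bnd G -> bnd (fun s => F s + G s).
Proof.
move=> [M1 M10 h1] [M2 M20 h2]; exists (M1 + M2); first exact: addr_ge0.
move=> t ht i j; rewrite mxE; apply: (le_trans (ler_normD _ _)).
exact: lerD (h1 t ht i j) (h2 t ht i j).
Qed.

Lemma bnd_opp p q (F : R -> 'M[R]_(p, q)) : bnd F -> bnd (fun s => - F s).
Proof.
move=> [M1 M10 h1]; exists M1 => // t ht i j; rewrite mxE normrN; exact: h1.
Qed.

Lemma bnd_tr p q (F : R -> 'M[R]_(p, q)) : bnd F -> bnd (fun s => (F s)^T).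
Proof.
move=> [M1 M10 h1]; exists M1 => // t ht i j; rewrite mxE; exact: h1.
Qed.

Lemma bnd_mul m n p (F : R -> 'M[R]_(m, n)) (G : R -> 'M[R]_(n, p)) :
  bnd F -> bnd G -> bnd (fun s => F s *m G s).
Proof.
move=> [M1 M10 h1] [M2 M20 h2]; exists (n%:R * (M1 * M2)).
  by apply: mulr_ge0 => //; exact: mulr_ge0.
move=> t ht i j; apply: mul_entry_le; [exact: h1|exact: h2].
Qed.

Lemma ctl_add p q (F G F' G' : R -> 'M[R]_(p, q)) :
  ctl F F' -> ctl G G' -> ctl (fun s => F s + G s) (fun s => F' s + G' s).
Proof.
move=> [M1 M10 h1] [M2 M20 h2]; exists (M1 + M2); first exact: addr_ge0.
move=> t ht i j; rewrite !mxE.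
have -> : F t i j + G t i j - (F' t i j + G' t i j) = (F t i j - F' t i j) + (G t i j - G' t i j).
  by rewrite opprD addrACA.
apply: (le_trans (ler_normD _ _)); rewrite mulrDl.
exact: lerD (h1 t ht i j) (h2 t ht i j).
Qed.

Lemma ctl_opp p q (F F' : R -> 'M[R]_(p, q)) : ctl F F' -> ctl (fun s => - F s) (fun s => - F' s).
Proof.
move=> [M1 M10 h1]; exists M1 => // t ht i j; rewrite !mxE -opprD normrN; exact: h1.
Qed.

Lemma ctl_tr p q (F F' : R -> 'M[R]_(p, q)) : ctl F F' -> ctl (fun s => (F s)^T) (fun s => (F' s)^T).
Proof.
move=> [M1 M10 h1]; exists M1 => // t ht i j; rewrite !mxE; exact: h1.
Qed.

Lemma ctl_cst p q (c : 'M[R]_(p, q)) : ctl (fun _ => c) (fun _ => c).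
Proof. by exists 0 => // t _ i j; rewrite subrr normr0 mul0r. Qed.

Lemma ctl_mul m n p (F F' : R -> 'M[R]_(m, n)) (G G' : R -> 'M[R]_(n, p)) :
  bnd F' -> bnd G -> ctl F F' -> ctl G G' ->
  ctl (fun s => F s *m G s) (fun s => F' s *m G' s).
Proof.
move=> [M1 M10 h1] [M2 M20 h2] [M3 M30 h3] [M4 M40 h4].
exists (n%:R * (M3 * M2) + n%:R * (M1 * M4)).
  by apply: addr_ge0; apply: mulr_ge0 => //; exact: mulr_ge0.
move=> t ht i j.
have -> : (F t *m G t) i j - (F' t *m G' t) i j =
   ((F t - F' t) *m G t) i j + (F' t *m (G t - G' t)) i j.
  rewrite mulmxBl mulmxBr !mxE.
  by rewrite addrA subrK.
apply: (le_trans (ler_normD _ _)); rewrite mulrDl.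
apply: lerD.
  have -> : n%:R * (M3 * M2) * delta t = n%:R * ((M3 * delta t) * M2) by ring.
  apply: mul_entry_le => [i' k|k j']; last exact: h2.
  by rewrite !mxE; exact: h3.
have -> : n%:R * (M1 * M4) * delta t = n%:R * (M1 * (M4 * delta t)) by ring.
apply: mul_entry_le => [i' k|k j']; first exact: h1.
by rewrite !mxE; exact: h4.
Qed.

Lemma good_add p q (F G F' G' : R -> 'M[R]_(p, q)) :
  good F F' -> good G G' -> good (fun s => F s + G s) (fun s => F' s + G' s).
Proof.
case=> b1 b1' c1 [b2 b2' c2]; split; [exact: bnd_add|exact: bnd_add|exact: ctl_add].
Qed.

Lemma good_opp p q (F F' : R -> 'M[R]_(p, q)) :
  good F F' -> good (fun s => - F s) (fun s => - F' s).
Proof. case=> b1 b1' c1; split; [exact: bnd_opp|exact: bnd_opp|exact: ctl_opp]. Qed.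

Lemma good_sub p q (F G F' G' : R -> 'M[R]_(p, q)) :
  good F F' -> good G G' -> good (fun s => F s - G s) (fun s => F' s - G' s).
Proof. by move=> h1 h2; apply: good_add => //; exact: good_opp. Qed.

Lemma good_tr p q (F F' : R -> 'M[R]_(p, q)) :
  good F F' -> good (fun s => (F s)^T) (fun s => (F' s)^T).
Proof. case=> b1 b1' c1; split; [exact: bnd_tr|exact: bnd_tr|exact: ctl_tr]. Qed.

Lemma good_cst p q (c : 'M[R]_(p, q)) : good (fun _ => c) (fun _ => c).
Proof. split; [exact: bnd_cst|exact: bnd_cst|exact: ctl_cst]. Qed.

Lemma good_mul m n p (F F' : R -> 'M[R]_(m, n)) (G G' : R -> 'M[R]_(n, p)) :
  good F F' -> good G G' -> good (fun s => F s *m G s) (fun s => F' s *m G' s).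
Proof.
case=> b1 b1' c1 [b2 b2' c2]; split; [exact: bnd_mul|exact: bnd_mul|exact: ctl_mul].
Qed.

Lemma good_ext p q (F G F' G' : R -> 'M[R]_(p, q)) :
  (forall t, inT t -> F t = F' t) -> (forall t, inT t -> G t = G' t) ->
  good F G -> good F' G'.
Proof.
move=> e1 e2 [[M1 M10 h1] [M2 M20 h2] [M3 M30 h3]]; split.
- by exists M1 => // t ht i j; rewrite -e1 //; exact: h1.
- by exists M2 => // t ht i j; rewrite -e2 //; exact: h2.
- by exists M3 => // t ht i j; rewrite -e1 // -e2 //; exact: h3.
Qed.

Lemma good_inv n (S S' Si Si' : R -> 'M[R]_n) :
  good S S' -> bnd Si -> bnd Si' ->
  (forall t, inT t -> Si t *m S t = 1%:M) -> (forall t, inT t -> S' t *m Si' t = 1%:M) ->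
  good Si Si'.
Proof.
move=> [_ _ [M3 M30 h3]] [M1 M10 h1] [M2 M20 h2] e1 e2; split; [by exists M1|by exists M2|].
exists (n%:R * (n%:R * (M1 * M3) * M2)).
  by apply: mulr_ge0 => //; apply: mulr_ge0 => //; apply: mulr_ge0 => //; exact: mulr_ge0.
move=> t ht i j.
have -> : Si t i j - Si' t i j = (Si t *m (S' t - S t) *m Si' t) i j.
  rewrite mulmxBr mulmxBl -mulmxA e2 // e1 // mulmx1 mul1mx !mxE.
  by [].
have -> : n%:R * (n%:R * (M1 * M3) * M2) * delta t =
   n%:R * ((n%:R * (M1 * (M3 * delta t))) * M2) by ring.
apply: mul_entry_le => [i' k|k j']; last exact: h2.
apply: mul_entry_le => [i'' l|l j'']; first exact: h1.
rewrite !mxE -opprB normrN; exact: h3.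
Qed.

Lemma bnd_cont p q (F : R -> 'M[R]_(p, q)) : 0 <= T -> (forall t, inT t -> mcont F t) -> bnd F.
Proof.
move=> T0 hF.
pose g (s : R) := \sum_i \sum_j `|F s i j|.
have gc : {within `[0, T], continuous g}%classic.
  apply: continuous_in_subspaceT => s; rewrite in_setE /= in_itv /= => hs.
  apply: cont_sumseq => i; apply: cont_sumseq => j.
  apply: (@continuous_comp _ _ _ (fun s => F s i j) Num.norm); first exact: hF.
  exact: norm_continuous.
have [c _ hc] := EVT_max T0 gc.
have hle : forall t i j, `|F t i j| <= g t.
  move=> t i j.
  apply: (@le_trans _ _ (\sum_j' `|F t i j'|)).
    by apply: (@le_sum_one _ (fun k => `|F t i k|) j) => k; exact: normr_ge0.
  apply: (@le_sum_one _ (fun i' => \sum_j' `|F t i' j'|) i).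
  by move=> k; apply: sumr_ge0 => l _; exact: normr_ge0.
exists (g c).
  by apply: sumr_ge0 => i _; apply: sumr_ge0 => j _; exact: normr_ge0.
move=> t ht i j; apply: (le_trans (hle t i j)); apply: hc.
by rewrite in_itv /=.
Qed.

Lemma bnd_inv n (C : R -> 'M[R]_n) : 0 <= T ->
  (forall t, inT t -> mcont C t) -> (forall t, inT t -> C t \in unitmx) ->
  bnd (fun s => invmx (C s)).
Proof.
move=> T0 hC hU.
pose g (s : R) := `|\det (C s)|^-1.
have gc : {within `[0, T], continuous g}%classic.
  apply: continuous_in_subspaceT => s; rewrite in_setE /= in_itv /= => hs.
  apply: (@continuousV _ _ (fun u => `|\det (C u)|)).
    by rewrite normr_eq0 -unitfE -unitmxE; exact: hU.
  apply: (@continuous_comp _ _ _ (fun s => \det (C s)) Num.norm).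
    exact: cont_det (hC s hs).
  exact: norm_continuous.
have [c _ hc] := EVT_max T0 gc.
have [Ma Ma0 hMa] : bnd (fun s => \adj (C s)).
  by apply: bnd_cont => // t ht; apply: mcont_adj; exact: hC.
exists (g c * Ma).
  by apply: mulr_ge0 => //; rewrite /g invr_ge0.
move=> t ht i j.
rewrite /invmx hU // mxE normrM.
apply: ler_pM; [exact: normr_ge0|exact: normr_ge0| |exact: hMa].
rewrite normfV; apply: hc; by rewrite in_itv /=.
Qed.

End Bounds.
Section Alg.
Variable R : realType.
Variables (n s r : nat) (A : 'M[R]_n) (B : 'M[R]_s) (dT : 'M[R]_(n, s)).
Variables (U dU : 'M[R]_(n, r)) (Y dY : 'M[R]_(s, r)) (phi : 'M[R]_r).
Hypothesis hA : A^T = A.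
Hypothesis hB : B^T = B.
Hypothesis hphi : phi^T = - phi.
Hypothesis hUU : U^T *m A *m U = 1%:M.
Hypothesis hC : Y^T *m B *m Y \in unitmx.
Let K := invmx (Y^T *m B *m Y).
Hypothesis hdU : dU = (1%:M - U *m U^T *m A) *m dT *m B *m Y *m K + U *m phi.
Hypothesis hdY : dY = dT^T *m A *m U + Y *m phi.

Definition Pm := U *m U^T *m A.
Definition Zm := U *m Y^T.
Definition Nm := U *m K *m U^T *m A.
Definition Vm := Nm *m Zm.
Definition Sm := Zm *m B *m Zm^T *m A + (1%:M - Pm).
Definition Sim := Nm + (1%:M - Pm).

Lemma hUUX m (X : 'M[R]_(m, r)) : X *m U^T *m A *m U = X.
Proof.
have -> : X *m U^T *m A *m U = X *m (U^T *m A *m U) by rewrite !mulmxA.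
by rewrite hUU mulmx1.
Qed.

Lemma hKC : K *m Y^T *m B *m Y = 1%:M.
Proof. by have := mulVmx hC; rewrite !mulmxA. Qed.

Lemma hKCX m (X : 'M[R]_(m, r)) : X *m K *m Y^T *m B *m Y = X.
Proof.
have -> : X *m K *m Y^T *m B *m Y = X *m (K *m Y^T *m B *m Y) by rewrite !mulmxA.
by rewrite hKC mulmx1.
Qed.

Lemma hCK : Y^T *m B *m Y *m K = 1%:M.
Proof. exact: mulmxV hC. Qed.

Lemma hKt : K^T = K.
Proof. by rewrite /K trmx_inv !trmx_mul trmxK hB mulmxA. Qed.

Lemma W_eq : Zm^T *m A *m Vm = Y *m K *m Y^T.
Proof.
rewrite /Vm /Nm /Zm trmx_mul trmxK !mulmxA.
by rewrite hUUX hUUX.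
Qed.

Lemma dZ_eq : dU *m Y^T + U *m dY^T =
  (1%:M - Pm) *m dT *m B *m (Zm^T *m A *m Vm) + Pm *m dT.
Proof.
rewrite W_eq hdU hdY /Pm !mulmxA.
set X := (1%:M - _) *m dT *m B *m Y *m K.
rewrite linearD /= !trmx_mul !trmxK hA hphi.
rewrite [(X + _) *m _]mulmxDl mulmxDr mulNmx mulmxN !mulmxA.
by rewrite addrACA subrr addr0.
Qed.

Lemma V_eq : Vm = U *m K *m Y^T.
Proof. by rewrite /Vm /Nm /Zm !mulmxA hUUX. Qed.

Lemma dP_eq : (dU *m U^T + U *m dU^T) *m A =
  (1%:M - Pm) *m dT *m B *m Vm^T *m A + Vm *m B *m dT^T *m A *m (1%:M - Pm).
Proof.
rewrite V_eq hdU /Pm.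
rewrite linearD /= !trmx_mul !trmxK linearB /= trmx1 !trmx_mul trmxK hA hB hphi hKt.
rewrite !mulmxA.
set X := (1%:M - _) *m dT *m B *m Y *m K.
have hE : (1%:M - A *m U *m U^T) *m A = A *m (1%:M - U *m U^T *m A).
  by rewrite mulmxBl mulmxBr mul1mx mulmx1 !mulmxA.
rewrite [(X + _) *m _]mulmxDl mulmxDr mulNmx mulmxN !mulmxA !mulmxDl mulNmx.
rewrite -[_ *m (1%:M - A *m U *m U^T) *m A]mulmxA hE !mulmxA.
by rewrite addrACA subrr addr0.
Qed.

Lemma PP : Pm *m Pm = Pm.
Proof. by rewrite /Pm !mulmxA hUUX. Qed.

Lemma PU : Pm *m U = U.
Proof. by rewrite /Pm hUUX. Qed.

Lemma omP_U : (1%:M - Pm) *m U = 0.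
Proof. by rewrite mulmxBl mul1mx PU subrr. Qed.

Lemma omP_omP : (1%:M - Pm) *m (1%:M - Pm) = 1%:M - Pm.
Proof. by rewrite mulmxBl mul1mx mulmxBr mulmx1 PP subrr subr0. Qed.

Lemma N_omP : Nm *m (1%:M - Pm) = 0.
Proof. by rewrite mulmxBr mulmx1 /Nm /Pm !mulmxA hUUX subrr. Qed.

Lemma omP_N : (1%:M - Pm) *m Nm = 0.
Proof. by rewrite /Nm !mulmxA omP_U !mul0mx. Qed.

Lemma omP_Z : (1%:M - Pm) *m Zm = 0.
Proof. by rewrite /Zm mulmxA omP_U mul0mx. Qed.

Lemma ZtA_omP : Zm^T *m A *m (1%:M - Pm) = 0.
Proof.
rewrite /Zm trmx_mul trmxK mulmxBr mulmx1 /Pm !mulmxA.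
by rewrite hUUX subrr.
Qed.

Lemma Si_S : Sim *m Sm = 1%:M.
Proof.
rewrite /Sim /Sm mulmxDl [Nm *m _]mulmxDr [(1%:M - Pm) *m (_ + (1%:M - Pm))]mulmxDr N_omP omP_omP addr0.
rewrite !mulmxA omP_U !mul0mx add0r.
rewrite /Nm /Zm /Pm trmx_mul trmxK !mulmxA hUUX hKCX.
by rewrite addrC subrK.
Qed.

Lemma S_Si : Sm *m Sim = 1%:M.
Proof.
rewrite /Sim /Sm [(_ + (1%:M - Pm)) *m _]mulmxDl.
rewrite [Zm *m _ *m _ *m _ *m (_ + _)]mulmxDr [(1%:M - Pm) *m (_ + _)]mulmxDr omP_N omP_omP add0r.
have hz : Zm *m B *m Zm^T *m A *m (1%:M - Pm) = 0.
  by have := ZtA_omP; rewrite -!mulmxA => ->; rewrite !mulmx0.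
rewrite hz addr0.
rewrite /Nm /Zm /Pm trmx_mul trmxK !mulmxA hUUX.
have -> : U *m Y^T *m B *m Y *m K = U.
  by have := hCK; rewrite -!mulmxA => h; rewrite h mulmx1.
by rewrite addrC subrK.
Qed.

End Alg.
Section Fin.
Variable R : realType.
Variables (n s r : nat) (A : 'M[R]_n) (B : 'M[R]_s) (dT : 'M[R]_(n, s)).
Variables (U dU Ut dUt : 'M[R]_(n, r)) (Y Yt : 'M[R]_(s, r)) (phi phit : 'M[R]_r).
Hypothesis hA : A^T = A.
Hypothesis hphi : phi^T = - phi.
Hypothesis hphit : phit^T = - phit.
Hypothesis hUU : U^T *m A *m U = 1%:M.
Hypothesis hUUt : Ut^T *m A *m Ut = 1%:M.
Hypothesis hdU : dU = (1%:M - U *m U^T *m A) *m dT *m B *m Y *m invmx (Y^T *m B *m Y) + U *m phi.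
Hypothesis hdUt : dUt = (1%:M - Ut *m Ut^T *m A) *m dT *m B *m Yt *m invmx (Yt^T *m B *m Yt) + Ut *m phit.
Hypothesis hP : Pm A U = Pm A Ut.
Hypothesis hZ : Zm U Y = Zm Ut Yt.

Let Rm := Ut^T *m A *m U.

Lemma fin1 : Ut *m Rm = U.
Proof.
have -> : Ut *m Rm = Pm A Ut *m U by rewrite /Rm /Pm !mulmxA.
by rewrite -hP (PU hUU).
Qed.

Lemma fin2 : Yt *m Rm = Y.
Proof.
have -> : Yt *m Rm = (Zm Ut Yt)^T *m A *m U by rewrite /Rm /Zm trmx_mul trmxK !mulmxA.
by rewrite -hZ /Zm trmx_mul trmxK (hUUX hUU).
Qed.

Lemma fin3 : Rm^T *m Rm = 1%:M.
Proof.
have -> : Rm^T *m Rm = U^T *m A *m (Pm A Ut *m U).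
  by rewrite /Rm /Pm !trmx_mul trmxK hA !mulmxA.
by rewrite -hP (PU hUU).
Qed.

Lemma fin4 : dUt^T *m A *m U + Ut^T *m A *m dU = Rm *m phi - phit *m Rm.
Proof.
rewrite hdUt hdU.
set Kt := invmx _. set K := invmx _.
rewrite linearD /= !trmx_mul linearB /= trmx1 !trmx_mul !trmxK hA hphit.
have e1 : (1%:M - A *m (Ut *m Ut^T)) *m A *m U = 0.
  rewrite !mulmxBl !mul1mx !mulmxA.
  have -> : A *m Ut *m Ut^T *m A *m U = A *m (Pm A Ut *m U) by rewrite /Pm !mulmxA.
  by rewrite -hP (PU hUU) subrr.
have e2 : Ut^T *m A *m (1%:M - U *m U^T *m A) = 0.
  rewrite mulmxBr mulmx1 !mulmxA.
  have -> : Ut^T *m A *m U *m U^T *m A = Ut^T *m A *m Pm A U by rewrite /Pm !mulmxA.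
  by rewrite hP /Pm !mulmxA hUUt mul1mx subrr.
have e1' : (1%:M - A *m (Ut *m Ut^T)) *m (A *m U) = 0 := etrans (mulmxA _ _ _) e1.
set E1 := Kt^T *m (Yt^T *m (B^T *m (dT^T *m (1%:M - A *m (Ut *m Ut^T))))).
set E2 := (1%:M - U *m U^T *m A) *m dT *m B *m Y *m K.
rewrite [(E1 + _) *m A]mulmxDl [(_ + _) *m U]mulmxDl [Ut^T *m A *m (E2 + _)]mulmxDr.
have -> : E1 *m A *m U = 0 by rewrite /E1 -!mulmxA e1' !mulmx0.
have -> : Ut^T *m A *m E2 = 0 by rewrite /E2 !mulmxA e2 !mul0mx.
rewrite add0r add0r mulNmx /Rm !mulmxA.
by rewrite !mulNmx addrC.
Qed.

End Fin.
Unset Implicit Arguments.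
Theorem mainTheorem1 (R : realType) (n s r : nat)
  (hn : (0 < n)%N) (hs : (0 < s)%N) (hr : (0 < r)%N)
  (wx : 'rV[R]_n) (wxi : 'rV[R]_s)
  (hwx : pos_rV wx) (hwxi : pos_rV wxi)
  (T dT : R -> 'M[R]_(n, s))
  (U dU Ut dUt : R -> 'M[R]_(n, r))
  (Y dY Yt dYt : R -> 'M[R]_(s, r))
  (phi phit : R -> 'M[R]_r)
  (R0 : 'M[R]_r)
  (hT : forall t, 0 <= t -> mx_deriv_at T t (dT t))
  (hdTc : forall t, 0 <= t -> mx_cont_at dT t)
  (hU : forall t, 0 <= t -> mx_deriv_at U t (dU t))
  (hY : forall t, 0 <= t -> mx_deriv_at Y t (dY t))
  (hUt : forall t, 0 <= t -> mx_deriv_at Ut t (dUt t))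
  (hYt : forall t, 0 <= t -> mx_deriv_at Yt t (dYt t))
  (hphic : forall t, 0 <= t -> mx_cont_at phi t)
  (hphitc : forall t, 0 <= t -> mx_cont_at phit t)
  (hphis : forall t, 0 <= t -> skew_mx (phi t))
  (hphits : forall t, 0 <= t -> skew_mx (phit t))
  (hUo : forall t, 0 <= t -> (U t)^T *m diag_mx wx *m U t = 1%:M)
  (hUto : forall t, 0 <= t -> (Ut t)^T *m diag_mx wx *m Ut t = 1%:M)
  (hC : forall t, 0 <= t -> (Y t)^T *m diag_mx wxi *m Y t \in unitmx)
  (hCt : forall t, 0 <= t -> (Yt t)^T *m diag_mx wxi *m Yt t \in unitmx)
  (hev : forall t, 0 <= t ->
     evol_eqs (diag_mx wx) (diag_mx wxi) (dT t) (U t) (dU t) (Y t) (dY t) (phi t))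
  (hevt : forall t, 0 <= t ->
     evol_eqs (diag_mx wx) (diag_mx wxi) (dT t) (Ut t) (dUt t) (Yt t) (dYt t) (phit t))
  (hR0 : orthogonal_mx R0)
  (hU0 : U 0 = Ut 0 *m R0) (hY0 : Y 0 = Yt 0 *m R0) :
  exists Rm : R -> 'M[R]_r,
    Rm 0 = R0 /\
    forall t, 0 <= t ->
      mx_deriv_at Rm t (Rm t *m phi t - phit t *m Rm t) /\
      orthogonal_mx (Rm t) /\
      U t = Ut t *m Rm t /\ Y t = Yt t *m Rm t.
Proof.
pose A := diag_mx wx; pose B := diag_mx wxi.
have hA : A^T = A by exact: tr_diag_mx.
have hB : B^T = B by exact: tr_diag_mx.
have dU' : forall t : R, 0 <= t -> mderiv U t (dU t) by move=> t h; apply/mderivE; exact: hU.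
have dY' : forall t : R, 0 <= t -> mderiv Y t (dY t) by move=> t h; apply/mderivE; exact: hY.
have dUt' : forall t : R, 0 <= t -> mderiv Ut t (dUt t) by move=> t h; apply/mderivE; exact: hUt.
have dYt' : forall t : R, 0 <= t -> mderiv Yt t (dYt t) by move=> t h; apply/mderivE; exact: hYt.
have ev : forall t : R, 0 <= t -> dU t = (1%:M - U t *m (U t)^T *m A) *m dT t *m B *m Y t *m invmx ((Y t)^T *m B *m Y t) + U t *m phi t /\ dY t = (dT t)^T *m A *m U t + Y t *m phi t.
  by move=> t h; have := hev t h.
have evt : forall t : R, 0 <= t -> dUt t = (1%:M - Ut t *m (Ut t)^T *m A) *m dT t *m B *m Yt t *m invmx ((Yt t)^T *m B *m Yt t) + Ut t *m phit t /\ dYt t = (dT t)^T *m A *m Ut t + Yt t *m phit t.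
  by move=> t h; have := hevt t h.
pose Z (t : R) := Zm (U t) (Y t).
pose Zt (t : R) := Zm (Ut t) (Yt t).
pose P (t : R) := Pm A (U t).
pose Pt (t : R) := Pm A (Ut t).
pose V (t : R) := Vm A B (U t) (Y t).
pose Vt (t : R) := Vm A B (Ut t) (Yt t).
pose FZ (t : R) := (1%:M - P t) *m dT t *m B *m ((Z t)^T *m A *m V t) + P t *m dT t.
pose FZt (t : R) := (1%:M - Pt t) *m dT t *m B *m ((Zt t)^T *m A *m Vt t) + Pt t *m dT t.
pose FP (t : R) := (1%:M - P t) *m dT t *m B *m (V t)^T *m A + V t *m B *m (dT t)^T *m A *m (1%:M - P t).
pose FPt (t : R) := (1%:M - Pt t) *m dT t *m B *m (Vt t)^T *m A + Vt t *m B *m (dT t)^T *m A *m (1%:M - Pt t).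
have hZd : forall t : R, 0 <= t -> mderiv Z t (FZ t).
  move=> t h; apply: mderiv_eq (mderiv_mul (dU' t h) (mderiv_tr (dY' t h))) _.
  have [e1 e2] := ev t h.
  exact: dZ_eq hA (hphis t h) (hUo t h) e1 e2.
have hZtd : forall t : R, 0 <= t -> mderiv Zt t (FZt t).
  move=> t h; apply: mderiv_eq (mderiv_mul (dUt' t h) (mderiv_tr (dYt' t h))) _.
  have [e1 e2] := evt t h.
  exact: dZ_eq hA (hphits t h) (hUto t h) e1 e2.
have hPd : forall t : R, 0 <= t -> mderiv P t (FP t).
  move=> t h; apply: mderiv_eq (mderiv_mul (mderiv_mul (dU' t h) (mderiv_tr (dU' t h))) (mderiv_cst A t)) _.
  have [e1 e2] := ev t h.
  rewrite mulmx0 addr0.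
  exact: dP_eq hA hB (hphis t h) (hUo t h) e1.
have hPtd : forall t : R, 0 <= t -> mderiv Pt t (FPt t).
  move=> t h; apply: mderiv_eq (mderiv_mul (mderiv_mul (dUt' t h) (mderiv_tr (dUt' t h))) (mderiv_cst A t)) _.
  have [e1 e2] := evt t h.
  rewrite mulmx0 addr0.
  exact: dP_eq hA hB (hphits t h) (hUto t h) e1.
have R0R0 : R0 *m R0^T = 1%:M := mulmx1C hR0.
have Z0 : Z 0 = Zt 0.
  by rewrite /Z /Zt /Zm hU0 hY0 trmx_mul !mulmxA -(mulmxA (Ut 0)) R0R0 mulmx1.
have P0 : P 0 = Pt 0.
  by rewrite /P /Pt /Pm hU0 trmx_mul !mulmxA -(mulmxA (Ut 0)) R0R0 mulmx1.
pose I := (('I_n * 'I_s) + ('I_n * 'I_n))%type.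
pose x (t : R) (e : I) : R := match e with inl p => Z t p.1 p.2 | inr p => P t p.1 p.2 end.
pose y (t : R) (e : I) : R := match e with inl p => Zt t p.1 p.2 | inr p => Pt t p.1 p.2 end.
pose dx (t : R) (e : I) : R := match e with inl p => FZ t p.1 p.2 | inr p => FP t p.1 p.2 end.
pose dy (t : R) (e : I) : R := match e with inl p => FZt t p.1 p.2 | inr p => FPt t p.1 p.2 end.
have key : forall t : R, 0 <= t -> forall e, x t e = y t e.
  apply: (@gronwall R I x y dx dy).
  - by move=> t h [[i j]|[i j]] /=; [exact: hZd t h i j | exact: hPd t h i j].
  - by move=> t h [[i j]|[i j]] /=; [exact: hZtd t h i j | exact: hPtd t h i j].
  - by move=> [[i j]|[i j]] /=; rewrite ?Z0 ?P0.
  move=> TT hT0.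
  pose delta (t : R) := \sum_e `|x t e - y t e|.
  have d0 : forall t, 0 <= delta t by move=> t; apply: sumr_ge0 => e _; exact: normr_ge0.
  have inT0 : forall t, inT TT t -> 0 <= t by move=> t /andP[].
  have cU : forall t, inT TT t -> mcont U t by move=> t ht; exact: mcont_of_deriv (dU' t (inT0 t ht)).
  have cY : forall t, inT TT t -> mcont Y t by move=> t ht; exact: mcont_of_deriv (dY' t (inT0 t ht)).
  have cUt : forall t, inT TT t -> mcont Ut t by move=> t ht; exact: mcont_of_deriv (dUt' t (inT0 t ht)).
  have cYt : forall t, inT TT t -> mcont Yt t by move=> t ht; exact: mcont_of_deriv (dYt' t (inT0 t ht)).
  have cdT : forall t, inT TT t -> mcont dT t by move=> t ht; apply/mcontE; exact: hdTc t (inT0 t ht).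
  have bU := bnd_cont hT0 cU. have bY := bnd_cont hT0 cY.
  have bUt := bnd_cont hT0 cUt. have bYt := bnd_cont hT0 cYt.
  have bdT := bnd_cont hT0 cdT.
  have bK : bnd TT (fun s => invmx ((Y s)^T *m B *m Y s)).
    apply: bnd_inv hT0 _ _.
      by move=> t ht; apply: mcont_mul (mcont_mul (mcont_tr (cY t ht)) (@mcont_cst _ _ _ B t)) (cY t ht).
    by move=> t ht; exact: hC t (inT0 t ht).
  have bKt : bnd TT (fun s => invmx ((Yt s)^T *m B *m Yt s)).
    apply: bnd_inv hT0 _ _.
      by move=> t ht; apply: mcont_mul (mcont_mul (mcont_tr (cYt t ht)) (@mcont_cst _ _ _ B t)) (cYt t ht).
    by move=> t ht; exact: hCt t (inT0 t ht).
  have bP : bnd TT P := bnd_mul (bnd_mul bU (bnd_tr bU)) (bnd_cst TT A).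
  have bPt : bnd TT Pt := bnd_mul (bnd_mul bUt (bnd_tr bUt)) (bnd_cst TT A).
  have gZ : good TT delta Z Zt.
    split; [exact: bnd_mul bU (bnd_tr bY) | exact: bnd_mul bUt (bnd_tr bYt) |].
    exists 1 => // t ht i j; rewrite mul1r.
    exact: (@le_sum_one _ _ (fun e => `|x t e - y t e|) (inl (i, j)) (fun k => normr_ge0 _)).
  have gP : good TT delta P Pt.
    split => //.
    exists 1 => // t ht i j; rewrite mul1r.
    exact: (@le_sum_one _ _ (fun e => `|x t e - y t e|) (inr (i, j)) (fun k => normr_ge0 _)).
  have gdT : good TT delta dT dT.
    by split => //; exists 0 => // t ht i j; rewrite subrr normr0 mul0r.
  have g1 : good TT delta (fun _ => 1%:M : 'M[R]_n) (fun _ => 1%:M) := good_cst TT delta 1%:M.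
  have gA := good_cst TT delta A.
  have gB := good_cst TT delta B.
  have gS : good TT delta (fun s => Sm A B (U s) (Y s)) (fun s => Sm A B (Ut s) (Yt s)).
    exact: good_add (good_mul (good_mul (good_mul gZ gB) (good_tr gZ)) gA) (good_sub g1 gP).
  have gSi : good TT delta (fun s => Sim A B (U s) (Y s)) (fun s => Sim A B (Ut s) (Yt s)).
    apply: good_inv gS _ _ _ _.
    - exact: bnd_add (bnd_mul (bnd_mul (bnd_mul bU bK) (bnd_tr bU)) (bnd_cst TT A)) (bnd_add (bnd_cst TT 1%:M) (bnd_opp bP)).
    - exact: bnd_add (bnd_mul (bnd_mul (bnd_mul bUt bKt) (bnd_tr bUt)) (bnd_cst TT A)) (bnd_add (bnd_cst TT 1%:M) (bnd_opp bPt)).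
    - by move=> t ht; exact: Si_S (hUo t (inT0 t ht)) (hC t (inT0 t ht)).
    - by move=> t ht; exact: S_Si (hUto t (inT0 t ht)) (hCt t (inT0 t ht)).
  have gN : good TT delta (fun s => Nm A B (U s) (Y s)) (fun s => Nm A B (Ut s) (Yt s)).
    apply: good_ext (good_sub gSi (good_sub g1 gP)).
      by move=> t _; rewrite /Sim addrK.
    by move=> t _; rewrite /Sim addrK.
  have gV : good TT delta V Vt := good_mul gN gZ.
  have gFZ : good TT delta FZ FZt.
    exact: good_add (good_mul (good_mul (good_mul (good_sub g1 gP) gdT) gB) (good_mul (good_mul (good_tr gZ) gA) gV)) (good_mul gP gdT).
  have gFP : good TT delta FP FPt.
    exact: good_add (good_mul (good_mul (good_mul (good_mul (good_sub g1 gP) gdT) gB) (good_tr gV)) gA) (good_mul (good_mul (good_mul (good_mul gV gB) (good_tr gdT)) gA) (good_sub g1 gP)).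
  case: gFZ => _ _ [M1 M10 h1]; case: gFP => _ _ [M2 M20 h2].
  exists (M1 + M2); first exact: addr_ge0.
  move=> t h0 hTT [[i j]|[i j]] /=.
    apply: le_trans (h1 t _ i j) _; first by apply/andP.
    by rewrite ler_wpM2r // lerDl.
  apply: le_trans (h2 t _ i j) _; first by apply/andP.
  by rewrite ler_wpM2r // lerDr.
have ZZ : forall t : R, 0 <= t -> Z t = Zt t.
  by move=> t h; apply/matrixP => i j; exact: (key t h (inl (i, j))).
have PP' : forall t : R, 0 <= t -> P t = Pt t.
  by move=> t h; apply/matrixP => i j; exact: (key t h (inr (i, j))).
exists (fun t => (Ut t)^T *m A *m U t); split.
  have h0 := hUto 0 (lexx 0).
  by rewrite hU0 !mulmxA h0 mul1mx.
move=> t h.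
have [e1 e2] := ev t h; have [e3 e4] := evt t h.
split.
  apply/mderivE.
  apply: mderiv_eq (mderiv_mul (mderiv_mul (mderiv_tr (dUt' t h)) (mderiv_cst A t)) (dU' t h)) _.
  rewrite mulmx0 addr0.
  exact: fin4 hA (hphits t h) (hUo t h) (hUto t h) e1 e3 (PP' t h).
split; first exact: fin3 hA (hUo t h) (PP' t h).
split; first by rewrite (fin1 (hUo t h) (PP' t h)).
by rewrite (fin2 (hUo t h) (ZZ t h)).
Qed.
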